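(* Let $a, b$ be positive integers with $b>1$ and let $i \ge 3$ be an integer with $\gcd(r_b(i),a) = \gcd(r_b(i-1),a) = 1$. Then $\omega \in \operatorname{Ap}(S_a(b,i))$ if and only if either $\omega = b\, a^{(i)}_i$, or there exist $\omega' \in \operatorname{Ap}(S_a(b,i-1))$ and $u_i \in \{0,\ldots,b-1\}$ such that \[\omega = \omega' + b^{i-1}\, \mathsf{m}_{S_a(b,i-1)}(\omega') + u_i\, a^{(i)}_i.\]
   Context: For $\ell \ge 1$, $r_b(\ell) = \sum_{j=0}^{\ell-1} b^j$, and $r_b(0)=0$. For integers $m\ge 2$ and $j\ge 1$, $a^{(m)}_j := r_b(m) + a\, r_b(j-1)$, and $S_a(b,m)$ is the submonoid of $\mathbb{N}$ generated by $\{a^{(m)}_j : j\ge 1\}$; when $\gcd(r_b(m),a)=1$ it is a numerical semigroup minimally generated by $a^{(m)}_1,\ldots,a^{(m)}_m$. $\operatorname{Ap}(S) = \{\omega\in S : \omega - \operatorname{m}(S) \notin S\}$ with $\operatorname{m}(S)$ the smallest nonzero element. For $\omega' \in \operatorname{Ap}(S_a(b,m))$, $\mathsf{m}_{S_a(b,m)}(\omega')$ denotes the (unique) length of $\omega'$, i.e. the unique value of $\sum_j u_j$ over all expressions $\omega' = \sum_{j=1}^m u_j a^{(m)}_j$ with $u_j\in\mathbb{N}$ (such length is unique for elements of this Apéry set). *)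

(* Defs.v *)
From mathcomp Require Import all_boot.
Set Implicit Arguments. Unset Strict Implicit. Unset Printing Implicit Defensive.

Definition rb (b l : nat) : nat := \sum_(j < l) b ^ j.

(* a^{(m)}_j = r_b(m) + a r_b(j-1), meaningful for j >= 1 *)
Definition gen (a b m j : nat) : nat := rb b m + a * rb b j.-1.

(* membership in the submonoid S_a(b,m) of N generated by {a^{(m)}_j : j >= 1}:
   finite sums of generators (the empty sum gives 0). *)
Definition inS (a b m w : nat) : Prop :=
  exists s : seq nat, all (fun j => 0 < j) s /\ w = \sum_(j <- s) gen a b m j.

Definition is_mult (a b m mu : nat) : Prop :=
  [/\ 0 < mu, inS a b m mu & forall x, 0 < x -> inS a b m x -> mu <= x].

(* Apery set w.r.t. the multiplicity: w in S and w - m(S) not in S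
   (w - m(S) must be a natural number, hence the condition m(S) <= w). *)
Definition inAp (a b m w : nat) : Prop :=
  inS a b m w /\ forall mu, is_mult a b m mu -> ~ (mu <= w /\ inS a b m (w - mu)).

(* Boolean test: w has an expression w = sum_{j=1}^m u_j a^{(m)}_j with
   sum_j u_j = l.  Since every generator is >= 1 (m >= 1), all u_j <= w, so
   the search over u_j in 'I_(w.+1) is exhaustive. *)
Definition has_length (a b m w l : nat) : bool :=
  [exists u : {ffun 'I_m -> 'I_w.+1},
     (w == \sum_(k < m) u k * gen a b m k.+1) && (l == \sum_(k < m) (u k : nat))].

(* The length m_S(w): the (least, and for Apery-set elements the unique)
   length of a factorization of w. *)
Definition len (a b m w : nat) : nat :=
  find (has_length a b m w) (iota 0 w.+1).

(* Main.v *)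
Require Import Defs.
From mathcomp Require Import all_boot.
From mathcomp Require Import zify.
Set Implicit Arguments. Unset Strict Implicit. Unset Printing Implicit Defensive.

Lemma rb0 b : rb b 0 = 0.
Proof. by rewrite /rb big_ord0. Qed.

Lemma rbSl b k : rb b k.+1 = 1 + b * rb b k.
Proof.
rewrite /rb big_ord_recl /= expn0 big_distrr /=; congr (_ + _).
by apply: eq_bigr => i _; rewrite expnS.
Qed.

Lemma rbSr b k : rb b k.+1 = rb b k + b ^ k.
Proof. by rewrite /rb big_ord_recr. Qed.

Lemma rb_gt0 b k : 0 < rb b k.+1.
Proof. by rewrite rbSl. Qed.

Lemma rb_mono b k l : k <= l -> rb b k <= rb b l.
Proof.
move=> /subnK <-; elim: (l - k) => [|d IH]; first by rewrite add0n.
by rewrite addSn rbSr; exact: leq_trans IH (leq_addr _ _).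
Qed.

Lemma rb_add b k m : rb b (k + m) = rb b k + b ^ k * rb b m.
Proof.
elim: k => [|k IH]; first by rewrite add0n rb0 expn0 mul1n.
by rewrite addSn !rbSl IH expnS mulnDr addnA mulnA.
Qed.

Fixpoint Phi (b n t : nat) : nat :=
  if n is n'.+1 then Phi b n' (t %% rb b n) + t %/ rb b n else 0.

Lemma PhiS b n t : Phi b n.+1 t = Phi b n (t %% rb b n.+1) + t %/ rb b n.+1.
Proof. by []. Qed.

Lemma Phi0 b n : Phi b n 0 = 0.
Proof. elim: n => //= n IH; by rewrite mod0n div0n IH. Qed.

Lemma PhiR b n t : Phi b n.+1 (t + rb b n.+1) = Phi b n.+1 t + 1.
Proof.
rewrite !PhiS modnDr divnDr ?dvdnn // divnn rb_gt0 addnA //.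
Qed.

Lemma PhiRn b n t c : Phi b n.+1 (t + c * rb b n.+1) = Phi b n.+1 t + c.
Proof.
elim: c => [|c IH]; first by rewrite mul0n addn0 addn0.
rewrite mulSnr addnA PhiR IH; lia.
Qed.

Lemma PhiRn0 b n c : Phi b n (c * rb b n) <= c.
Proof.
case: n => [//|n]. by have := PhiRn b n 0 c; rewrite add0n Phi0 add0n => ->.
Qed.

Lemma Phi_pred b n z : 0 < z -> Phi b n z.-1 <= Phi b n z + b.-1.
Proof.
elim: n z => [//|n IH] z z0.
rewrite !PhiS.
set R := rb b n.+1.
have R0 : 0 < R := rb_gt0 b n.
have Hz := divn_eq z R.
set q := z %/ R in Hz *; set x := z %% R in Hz *.
have xlt : x < R := ltn_pmod z R0.
case: (posnP x) => [x0|xpos].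
- have q0 : 0 < q by move: Hz; rewrite x0; case: (q) => //; lia.
  have e : z.-1 = q.-1 * R + R.-1.
    rewrite Hz x0 addn0; case: (q) q0 => // q' _.
    rewrite mulSn /=; lia.
  rewrite e modnMDl divnMDl // modn_small ?divn_small; try lia.
  rewrite x0 Phi0.
  have : R.-1 = b * rb b n by rewrite /R rbSl.
  move=> ->; have := PhiRn0 b n b; lia.
- have e : z.-1 = q * R + x.-1 by lia.
  rewrite e modnMDl divnMDl // modn_small ?divn_small; try lia.
  have := IH x xpos; lia.
Qed.

Lemma Phi_add b n k t : 0 < b -> k <= n -> Phi b n (t + rb b k) <= Phi b n t + 1.
Proof.
move=> b0; elim: n k t => [|n IH] k t kn; first by [].
rewrite leq_eqVlt in kn; case/orP: kn => [/eqP ->|kn]; first by rewrite PhiR.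
case: k kn => [|k] kn; first by rewrite rb0 addn0 leq_addr.
case: n IH kn => [|n] IH kn; first by [].
have kn' : k.+1 <= n.+1 by [].
set rho := rb b n.+1.
have RR : rb b n.+2 = 1 + b * rho by rewrite rbSl.
set r := rb b k.+1.
have r1 : 0 < r := rb_gt0 b k.
have rrho : r <= rho := rb_mono b kn'.
rewrite !(PhiS b n.+1).
set R := rb b n.+2 in RR *.
have R0 : 0 < R by rewrite RR.
have Ht := divn_eq t R.
set q := t %/ R in Ht *; set x := t %% R in Ht *.
have xlt : x < R := ltn_pmod t R0.
case: (ltnP (x + r) R) => h.
- have e : t + r = q * R + (x + r) by lia.
  rewrite e modnMDl divnMDl // modn_small ?divn_small //.
  have := IH k.+1 x kn'; rewrite -/r; lia.
- have e : t + r = q.+1 * R + (x + r - R) by rewrite mulSnr; lia.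
  have rhoR : rho < R by rewrite RR; nia.
  rewrite e modnMDl divnMDl // modn_small ?divn_small; try lia.
  set y := x + r - R.
  have e1 : b.-1 * rho + rho = b * rho by rewrite -mulSnr prednK.
  set z := x - b.-1 * rho.
  have ex : x = z + b.-1 * rho by lia.
  have Px : Phi b n.+1 x = Phi b n.+1 z + b.-1 by rewrite ex PhiRn.
  have ey : y.+1 + rho = z + r by lia.
  have P1 : Phi b n.+1 (y.+1 + rho) = Phi b n.+1 y.+1 + 1 by rewrite PhiR.
  have P2 := IH k.+1 z kn'.
  have P3 : Phi b n.+1 y <= Phi b n.+1 y.+1 + b.-1 := Phi_pred b n.+1 (ltn0Sn y).
  rewrite ey in P1; rewrite -/r in P2.
  lia.
Qed.

Lemma Phi_addn b n k t c : 0 < b -> k <= n ->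
  Phi b n (t + c * rb b k) <= Phi b n t + c.
Proof.
move=> b0 kn; elim: c => [|c IH]; first by rewrite mul0n !addn0.
rewrite mulSnr addnA; have := Phi_add (t + c * rb b k) b0 kn; lia.
Qed.

Lemma Phi_seq b n s : 0 < b -> all (fun j => 0 < j <= n) s ->
  Phi b n (\sum_(j <- s) rb b j.-1) <= size s.
Proof.
move=> b0; elim: s => [|j s IH]; first by rewrite big_nil Phi0.
rewrite big_cons /= => /andP [/andP [j0 jn] hs].
have kn : j.-1 <= n by apply: leq_trans (leq_pred j) jn.
rewrite addnC; have := Phi_add (\sum_(j <- s) rb b j.-1) b0 kn.
have := IH hs; lia.
Qed.

Lemma Phi_big b n m (u : 'I_m -> nat) : 0 < b -> m <= n ->
  Phi b n (\sum_(k < m) u k * rb b k) <= \sum_(k < m) u k.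
Proof.
move=> b0 mn.
apply: (big_rec2 (fun y1 y2 => Phi b n y1 <= y2)); first by rewrite Phi0.
move=> i y1 y2 _ IH.
have kn : (i : nat) <= n by apply: leq_trans (ltnW (ltn_ord i)) mn.
rewrite addnC; have := Phi_addn y1 (u i) b0 kn; lia.
Qed.

Lemma sum_gen_seq a b m s :
  \sum_(j <- s) gen a b m j = size s * rb b m + a * \sum_(j <- s) rb b j.-1.
Proof.
elim: s => [|j s IH]; first by rewrite !big_nil muln0.
rewrite !big_cons IH /gen /=; nia.
Qed.

Lemma sum_gen_ffun a b m (x : 'I_m -> nat) :
  \sum_(k < m) x k * gen a b m k.+1 =
  (\sum_(k < m) x k) * rb b m + a * \sum_(k < m) x k * rb b k.
Proof.
rewrite big_distrl big_distrr -big_split /=; apply: eq_bigr => k _.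
by rewrite /gen /= mulnDr mulnCA.
Qed.

Definition inS' a b m w := exists s : seq nat,
  all (fun j => 0 < j <= m) s /\ w = \sum_(j <- s) gen a b m j.

Lemma inS'_inS a b m w : inS' a b m w -> inS a b m w.
Proof.
case=> s [hs ->]; exists s; split=> //.
by apply: sub_all hs => j /andP [].
Qed.

Lemma inS'0 a b m : inS' a b m 0.
Proof. by exists [::]; rewrite big_nil. Qed.

Lemma inS'_add a b m x y : inS' a b m x -> inS' a b m y -> inS' a b m (x + y).
Proof.
case=> s [hs ->] [t [ht ->]]; exists (s ++ t).
by rewrite all_cat hs ht big_cat.
Qed.

Lemma inS'_gen a b m j : 0 < j <= m -> inS' a b m (gen a b m j).
Proof. by move=> h; exists [:: j]; rewrite big_seq1 /= h. Qed.

Lemma inS'_mul a b m c x : inS' a b m x -> inS' a b m (c * x).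
Proof.
move=> hx; elim: c => [|c IH]; first by rewrite mul0n; exact: inS'0.
by rewrite mulSn; apply: inS'_add.
Qed.

Lemma gen1 a b m : gen a b m 1 = rb b m.
Proof. by rewrite /gen rb0 muln0 addn0. Qed.

Lemma inS'_R a b m c : 0 < m -> inS' a b m (c * rb b m).
Proof. by move=> m0; rewrite -(gen1 a); apply/inS'_mul/inS'_gen; rewrite m0. Qed.

Lemma inS'_genall a b m j : 0 < m -> 0 < j -> inS' a b m (gen a b m j).
Proof.
move=> m0; elim/ltn_ind: j => j IH j0.
case: (leqP j m) => jm; first by apply: inS'_gen; rewrite j0 jm.
set j' := j - m.
have j'0 : 0 < j' by rewrite subn_gt0.
have e : gen a b m j = gen a b m j' + (a * b ^ j'.-1) * rb b m.
  rewrite /gen.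
  have -> : j.-1 = j'.-1 + m by rewrite /j'; lia.
  rewrite rb_add; nia.
rewrite e; apply: inS'_add; last exact: inS'_R.
apply: IH => //; rewrite /j'; lia.
Qed.

Lemma inS_inS' a b m w : 0 < m -> inS a b m w -> inS' a b m w.
Proof.
move=> m0 [s [hs ->]]; elim: s hs => [|j s IH]; first by rewrite big_nil => _; exact: inS'0.
rewrite /= big_cons => /andP [j0 hs]; apply: inS'_add; last exact: IH.
exact: inS'_genall.
Qed.

Lemma inS'_dec a b m w : 0 < b -> inS' a b m w ->
  exists L T, w = L * rb b m + a * T /\ Phi b m T <= L.
Proof.
move=> b0 [s [hs ->]]; exists (size s), (\sum_(j <- s) rb b j.-1); split.
  exact: sum_gen_seq.
exact: Phi_seq.
Qed.

Lemma inS'_sum a b m (x : 'I_m -> nat) : inS' a b m (\sum_(k < m) x k * gen a b m k.+1).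
Proof.
apply: (big_ind (inS' a b m)); [exact: inS'0| exact: inS'_add|].
by move=> k _; apply/inS'_mul/inS'_gen; rewrite ltn_ord.
Qed.

Lemma is_mult_R a b m : 0 < b -> 0 < m -> is_mult a b m (rb b m).
Proof.
move=> b0 m0; split.
- by case: m m0 => // m _; exact: rb_gt0.
- by rewrite -(gen1 a); apply/inS'_inS/inS'_gen; rewrite m0.
- move=> x x0 /(inS_inS' m0) [[|j s] [_ ex]]; first by move: x0; rewrite ex big_nil.
  by rewrite ex big_cons /gen -addnA leq_addr.
Qed.

Lemma Ap_iff a b m w : 0 < b -> 0 < m -> inAp a b m w <->
  inS a b m w /\ ~ (rb b m <= w /\ inS a b m (w - rb b m)).
Proof.
move=> b0 m0; have hR := is_mult_R a b0 m0; split.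
- by case=> h1 h2; split=> //; apply: h2.
- case=> h1 h2; split=> // mu hmu.
  have -> // : mu = rb b m.
  case: hmu hR => [mu0 Smu hmu] [R0 SR hR].
  by apply/eqP; rewrite eqn_leq hmu // hR.
Qed.

Lemma cancel_mod R a X Y t r : coprime R a -> t < R -> r < R ->
  X * R + a * t = Y * R + a * r -> t = r /\ X = Y.
Proof.
move=> co tR rR e.
have R0 : 0 < R by lia.
suff tr : t = r.
  split=> //; subst r.
  have : X * R = Y * R by lia.
  by move/eqP; rewrite eqn_mul2r => /orP [/eqP R00|/eqP //]; lia.
wlog le : t r X Y tR rR e / t <= r.
  move=> H; case: (leqP t r) => h; first exact: (H t r X Y).
  symmetry; apply: (H r t Y X); [done|done|by rewrite e|exact: ltnW].
have d : R %| (r - t) * a.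
  have -> : (r - t) * a = (X - Y) * R.
    rewrite !mulnBl.
    have : a * t <= a * r by rewrite leq_mul2l le orbT.
    rewrite [t * a]mulnC [r * a]mulnC; lia.
  exact: dvdn_mull.
rewrite Gauss_dvdl // in d.
case: (posnP (r - t)) => h; first lia.
have := dvdn_leq h d; lia.
Qed.

Definition E a b n t := Phi b n.+1 t * rb b n.+2 + a * t.

Lemma Rep b n t : exists f : nat -> nat,
  \sum_(k < n.+2) f k = Phi b n.+1 t /\ \sum_(k < n.+2) f k * rb b k = t.
Proof.
elim: n t => [|n IH] t.
  exists (fun k => if k == 1 then t else 0).
  have r1 : rb b 1 = 1 by rewrite rbSl rb0 muln0.
  have e1 : Phi b 1 t = t by rewrite PhiS r1 divn1.
  rewrite e1 !big_ord_recr big_ord0 /= r1 rb0; rewrite !big_ord0; split; lia.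
have [f [f1 f2]] := IH (t %% rb b n.+2).
exists (fun k => if k == n.+2 then t %/ rb b n.+2 else f k).
set F := fun k => if k == n.+2 then t %/ rb b n.+2 else f k.
have s1 : \sum_(k < n.+3) F k = \sum_(k < n.+2) f k + t %/ rb b n.+2.
  rewrite big_ord_recr /= /F eqxx; congr (_ + _).
  by apply: eq_bigr => k _; rewrite ltn_eqF.
have s2 : \sum_(k < n.+3) F k * rb b k = \sum_(k < n.+2) f k * rb b k + t %/ rb b n.+2 * rb b n.+2.
  rewrite big_ord_recr /= /F eqxx; congr (_ + _).
  by apply: eq_bigr => k _; rewrite ltn_eqF.
rewrite s1 s2 f1 f2 (PhiS b n.+1); split=> //.
by rewrite addnC -divn_eq.
Qed.

Section Main.
Variables (a b n : nat).
Hypotheses (a0 : 0 < a) (b1 : 1 < b) (co : coprime (rb b n.+2) a).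

Let b0 : 0 < b. Proof. by apply: ltnW. Qed.

Lemma E_inS' t : inS' a b n.+2 (E a b n t).
Proof.
have [f [f1 f2]] := Rep b n t.
have -> : E a b n t = \sum_(k < n.+2) f k * gen a b n.+2 k.+1.
  by rewrite sum_gen_ffun f1 f2.
exact: inS'_sum.
Qed.

Lemma M1 t : t < rb b n.+2 -> inAp a b n.+2 (E a b n t).
Proof.
move=> tR; apply/Ap_iff => //; split; first exact/inS'_inS/E_inS'.
case=> le /(inS_inS' (ltn0Sn _)) /(inS'_dec b0) [L [T [e hP]]].
rewrite (PhiS b n.+1) in hP.
set R := rb b n.+2 in tR le e hP.
have R0 : 0 < R := rb_gt0 b n.+1.
have HT := divn_eq T R.
set q := T %/ R in HT hP; set rho := T %% R in HT hP.
have rhoR : rho < R := ltn_pmod T R0.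
have e2 : Phi b n.+1 t * R + a * t = (L + 1 + a * q) * R + a * rho.
  move: e le; rewrite /E -/R => e le.
  have aT : a * T = (a * q) * R + a * rho by rewrite HT mulnDr mulnA.
  lia.
have [tr eq2] := cancel_mod co tR rhoR e2.
subst rho; rewrite -tr in hP; nia.
Qed.

Lemma M2 w : inAp a b n.+2 w -> exists2 t, t < rb b n.+2 & w = E a b n t.
Proof.
move/Ap_iff => /(_ b0 (ltn0Sn _)) [hS hn].
have [L [T [e hP]]] := inS'_dec b0 (inS_inS' (ltn0Sn _) hS).
rewrite (PhiS b n.+1) in hP.
set R := rb b n.+2 in e hP hn.
have R0 : 0 < R := rb_gt0 b n.+1.
have HT := divn_eq T R.
set q := T %/ R in HT hP; set rho := T %% R in HT hP.
have rhoR : rho < R := ltn_pmod T R0.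
exists rho => //.
set c := L + a * q - Phi b n.+1 rho.
have ew : w = E a b n rho + c * R by rewrite e /E -/R /c; nia.
case: (posnP c) => c0; first by rewrite ew c0 addn0.
exfalso; apply: hn; split; first by rewrite ew; nia.
have -> : w - R = E a b n rho + c.-1 * R by rewrite ew; case: (c) c0 => // c' _; rewrite mulSn /=; lia.
apply: inS'_inS; apply: inS'_add; first exact: E_inS'.
exact: inS'_R.
Qed.

Lemma M3 t : t < rb b n.+2 -> len a b n.+2 (E a b n t) = Phi b n.+1 t.
Proof.
move=> tR.
set w := E a b n t.
set R := rb b n.+2 in tR.
have R0 : 0 < R := rb_gt0 b n.+1.
have Pw : Phi b n.+1 t <= w by rewrite /w /E -/R; nia.
have claim : forall l, has_length a b n.+2 w l = (l == Phi b n.+1 t).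
  move=> l; apply/existsP/eqP.
  - case=> u /andP [/eqP e1 /eqP e2].
    rewrite (sum_gen_ffun a b (fun k => (u k : nat))) -/R -e2 in e1.
    set T := \sum_(k < n.+2) (u k : nat) * rb b k in e1.
    have hP : Phi b n.+2 T <= l.
      by rewrite e2; apply: (Phi_big (fun k => (u k : nat))).
    rewrite (PhiS b n.+1) -/R in hP.
    have HT := divn_eq T R.
    set q := T %/ R in HT hP; set rho := T %% R in HT hP.
    have rhoR : rho < R := ltn_pmod T R0.
    have e3 : Phi b n.+1 t * R + a * t = (l + a * q) * R + a * rho.
      move: e1; rewrite /w /E -/R => e1; nia.
    have [tr eq2] := cancel_mod co tR rhoR e3.
    subst rho; rewrite -tr in hP; nia.
  - move=> ->.
    have [f [f1 f2]] := Rep b n t.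
    have fk : forall k : 'I_n.+2, f k < w.+1.
      move=> k; rewrite ltnS; apply: leq_trans Pw; rewrite -f1.
      by rewrite (bigD1 k) //= leq_addr.
    pose u : {ffun 'I_n.+2 -> 'I_w.+1} := [ffun k : 'I_n.+2 => inord (f k)].
    have uk : forall k : 'I_n.+2, (u k : nat) = f k.
      by move=> k; rewrite ffunE inordK.
    exists u.
    rewrite (eq_bigr (fun k : 'I_n.+2 => f k * gen a b n.+2 k.+1)); last by move=> k _; rewrite uk.
    rewrite (eq_bigr (fun k : 'I_n.+2 => f k) (fun k _ => uk k)).
    by rewrite sum_gen_ffun f1 f2 /w /E -/R !eqxx.
rewrite /len (eq_find claim).
have hi : Phi b n.+1 t < size (iota 0 w.+1) by rewrite size_iota ltnS.
have := index_uniq 0 hi (iota_uniq 0 w.+1).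
by rewrite nth_iota ?add0n // -size_iota.
Qed.

End Main.

Theorem corollary19 (a b i : nat) :
  0 < a -> 1 < b -> 3 <= i ->
  coprime (rb b i) a -> coprime (rb b i.-1) a ->
  forall w : nat,
    inAp a b i w <->
    (w = b * gen a b i i \/
     exists w' ui : nat,
       [/\ inAp a b i.-1 w', ui < b &
           w = w' + b ^ i.-1 * len a b i.-1 w' + ui * gen a b i i]).
Proof.
case: i => [|[|[|n]]] //= a0 b1 _ co1 co2 w.
have b0 : 0 < b by apply: ltnW.
have rho0 : 0 < rb b n.+2 := rb_gt0 b n.+1.
have RR : rb b n.+3 = 1 + b * rb b n.+2 by rewrite rbSl.
have RR' : rb b n.+3 = rb b n.+2 + b ^ n.+2 by rewrite rbSr.
have gg : gen a b n.+3 n.+3 = rb b n.+3 + a * rb b n.+2 by [].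
split.
- move/(M2 a0 b1 co1) => [t tR ->].
  rewrite /E (PhiS b n.+1).
  set rho := rb b n.+2 in rho0 RR RR' gg *.
  have Ht := divn_eq t rho.
  set q := t %/ rho in Ht *; set x := t %% rho in Ht *.
  have xlt : x < rho := ltn_pmod t rho0.
  have qb : q <= b.
    rewrite -ltnS ltn_divLR // mulSn; rewrite RR in tR; lia.
  case: (ltnP q b) => qb'.
  + right; exists (E a b n x), q; split=> //.
      exact: M1.
    rewrite (M3 a0 b1 co2 xlt) gg /E -/rho RR'.
    rewrite Ht; nia.
  + left.
    have qe : q = b by lia.
    have x0 : x = 0.
      rewrite RR in tR; rewrite qe in Ht; nia.
    rewrite gg x0 Phi0 qe Ht qe x0; nia.
- case=> [->|[w' [ui [hw' ub ->]]]].
  + have tR : b * rb b n.+2 < rb b n.+3 by rewrite RR.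
    have := M1 a0 b1 co1 tR.
    have -> : E a b n.+1 (b * rb b n.+2) = b * gen a b n.+3 n.+3.
      rewrite /E.
      have := PhiRn b n.+1 0 b; rewrite add0n Phi0 add0n => ->.
      rewrite gg; nia.
    by [].
  + have [x xlt ->] := M2 a0 b1 co2 hw'.
    rewrite (M3 a0 b1 co2 xlt).
    set t := ui * rb b n.+2 + x.
    have tR : t < rb b n.+3 by rewrite RR /t; nia.
    have := M1 a0 b1 co1 tR.
    have -> : E a b n.+1 t = E a b n x + b ^ n.+2 * Phi b n.+1 x + ui * gen a b n.+3 n.+3.
      rewrite /E (PhiS b n.+1) /t modnMDl divnMDl // modn_small ?divn_small //.
      rewrite gg RR'; nia.
    by [].
Qed.
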